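(* The periodic points of $\Phi_{\mathrm{Id}}\colon\mathcal{M}(2;\mathbb{C})\to\mathcal{M}(2;\mathbb{C})$, $\mathrm{M}\mapsto\mathrm{M}^2$, other than the zero matrix $\mathbf{0}$, are contained in the boundary $\partial\mathrm{W}^s_{\mathrm{Id}}(\mathbf{0})$ of the basin of attraction of $\mathbf{0}$.
   Context: $\mathrm{W}^s_{\mathrm{Id}}(\mathbf{0})=\{\mathrm{M}\in\mathcal{M}(2;\mathbb{C}):\Phi_{\mathrm{Id}}^k(\mathrm{M})\to\mathbf{0}\text{ as }k\to\infty\}$. A point is periodic if $\Phi_{\mathrm{Id}}^k(\mathrm{M})=\mathrm{M}$ for some $k\geq1$. *)

(* Defs.v *)
(* Complex numbers are modelled as R[i] = complex R
   for an arbitrary R : realType (the real numbers); M(2;C) = 'M[R[i]]_2 with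
   its canonical (entrywise / norm) topology from matrix_normedtype. *)
From HB Require Import structures.
From mathcomp Require Import all_boot all_order all_algebra.
From mathcomp Require Import complex.
From mathcomp Require Import all_classical all_reals all_analysis.
Set Implicit Arguments. Unset Strict Implicit. Unset Printing Implicit Defensive.
Import Order.TTheory GRing.Theory Num.Theory.
Import numFieldTopology.Exports.
Local Open Scope ring_scope.
Local Open Scope classical_set_scope.

(* Equip C = R[i] with its standard metric topology (from the modulus |z|),
   i.e. the numClosedFieldType topology of numFieldTopology, made canonical. *)
HB.instance Definition _ (R : rcfType) := PseudoPointedMetric.copy R[i] (R[i])^o.

Definition Phi_Id (R : realType) (M : 'M[R[i]]_2) : 'M[R[i]]_2 := M *m M.

Definition Ws_Id0 (R : realType) : set 'M[R[i]]_2 :=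
  [set M | (fun k : nat => iter k (@Phi_Id R) M) @ \oo --> (0 : 'M[R[i]]_2)].

Definition periodic_Id (R : realType) (M : 'M[R[i]]_2) : Prop :=
  exists k : nat, (1 <= k)%N /\ iter k (@Phi_Id R) M = M.

Definition boundary (T : topologicalType) (A : set T) : set T :=
  closure A `\` interior A.

(* Main.v *)
Require Import Defs.
From HB Require Import structures.
From mathcomp Require Import all_boot all_order all_algebra.
From mathcomp Require Import complex.
From mathcomp Require Import all_classical all_reals all_analysis.
Import numFieldTopology.Exports.
Import Order.TTheory GRing.Theory Num.Theory.
Local Open Scope ring_scope.
Local Open Scope classical_set_scope.

Lemma normcR' (R : rcfType) (x : R) : `|x%:C%C| = `|x|%:C%C.
Proof. by rewrite normc_def /= expr0n /= addr0 sqrtr_sqr. Qed.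

Lemma ge0_real (R : rcfType) (x : R[i]) : 0 <= x -> x = (complex.Re x)%:C%C.
Proof.
rewrite lecE => /andP[/eqP H _]; case: x H => a b /= ->. by [].
Qed.

Section S.
Variable R : realType.
Implicit Types M X : 'M[R[i]]_2.

Lemma iterZ (t : R[i]) X k :
  iter k (@Phi_Id R) (t *: X) = t ^+ (2 ^ k) *: iter k (@Phi_Id R) X.
Proof.
elim: k => [|k IH]; first by rewrite expr1.
rewrite !iterS IH /Phi_Id -scalemxAl -scalemxAr scalerA -exprD.
by rewrite expnS mul2n -addnn.
Qed.

Lemma iter_mul M p n : iter p (@Phi_Id R) M = M -> iter (n * p) (@Phi_Id R) M = M.
Proof.
move=> Hp; elim: n => [|n IH] //=.
by rewrite mulSn iterD IH Hp.
Qed.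

Lemma iter_bound M p k : (0 < p)%N -> iter p (@Phi_Id R) M = M ->
  `|iter k (@Phi_Id R) M| <= \sum_(j < p) `|iter j (@Phi_Id R) M|.
Proof.
move=> p0 Hp.
have -> : iter k (@Phi_Id R) M = iter (k %% p) (@Phi_Id R) M.
  by rewrite {1}(divn_eq k p) addnC iterD iter_mul.
rewrite (bigD1 (Ordinal (ltn_pmod k p0))) //= lerDl.
by apply: sumr_ge0 => i _.
Qed.

Lemma notWs M p : (0 < p)%N -> iter p (@Phi_Id R) M = M -> M != 0 -> ~ Ws_Id0 M.
Proof.
move=> p0 Hp M0 /cvgr0_norm_lt H.
have [N _ HN] := H `|M| ltac:(by rewrite normr_gt0).
have := HN (N * p)%N; rewrite /= iter_mul // ltxx => /(_ _)/negP; apply.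
  by rewrite leq_pmulr.
by [].
Qed.

Lemma inWs M p (s : R) : (0 < p)%N -> iter p (@Phi_Id R) M = M ->
  0 <= s < 1 -> Ws_Id0 (s%:C%C *: M).
Proof.
move=> p0 Hp /andP[s0 s1].
set C := \sum_(j < p) `|iter j (@Phi_Id R) M|.
have C0 : 0 <= C by apply: sumr_ge0.
apply/cvgr0Pnorm_lt => eps eps0.
have er : 0 < complex.Re eps by move: eps0; rewrite ltcE => /andP[].
have Ee : eps = (complex.Re eps)%:C%C by apply: ge0_real; exact: ltW.
have /cvgMr_tmp Hc := cvg_expr (ltac:(by rewrite ger0_norm) : `|s| < 1).
have {}Hc := Hc (complex.Re C); rewrite mul0r in Hc.
have {}Hc : \forall k \near \oo, `|s ^+ k * complex.Re C| < complex.Re eps.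
  by apply: cvgr0_norm_lt.
near=> k.
rewrite iterZ normrZ normrX normcR' (ger0_norm s0).
apply: (le_lt_trans (ler_wpM2l _ (@iter_bound M p k p0 Hp))).
  by rewrite exprn_ge0 // lecR.
rewrite -/C (@ge0_real _ _ C0) Ee -rmorphXn -rmorphM ltcR.
apply: le_lt_trans (_ : `|s ^+ k * complex.Re C| < _); last by near: k.
rewrite ger0_norm; last by rewrite mulr_ge0 ?exprn_ge0 //; move: C0; rewrite lecE => /andP[].
apply: ler_wpM2r; first by move: C0; rewrite lecE => /andP[].
apply: ler_wiXn2l => //; first exact: ltW.
by apply: ltnW; apply: ltn_expl.
Unshelve. all: by end_near.
Qed.
End S.

From mathcomp Require Import ring lra.

Theorem proposition3p3 (R : realType) (M : 'M[R[i]]_2) :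
  periodic_Id M -> M != 0 -> boundary (@Ws_Id0 R) M.
Proof.
move=> [p [p0 Hp]] M0; split; last first.
  by move=> /interior_subset; apply: (@notWs R M p p0 Hp M0).
move=> B /nbhs_ballP [e e0 HB].
have Ma : 0 <= `|M| by [].
set a := complex.Re `|M|. set b := complex.Re e.
have a0 : 0 <= a by move: Ma; rewrite lecE => /andP[].
have e0c : (0 : R[i]) < e := e0.
have b0 : 0 < b by move: e0c; rewrite ltcE => /andP[].
have Ea : `|M| = a%:C%C by apply: ge0_real.
have Eb : e = b%:C%C by apply: ge0_real; exact: ltW.
have D0 : 0 < b + 2 * a + 2 by lra.
set s := (2 * a + 2) / (b + 2 * a + 2).
have s1 : (1 - s : R) = b / (b + 2 * a + 2).
  by rewrite /s; field; rewrite gt_eqF.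
exists (s%:C%C *: M); split.
  apply: (@inWs R M p s p0 Hp). apply/andP; split.
    by apply: divr_ge0; lra.
  by rewrite /s ltr_pdivrMr //; lra.
apply: HB; rewrite -ball_normE /=.
rewrite -{1}(scale1r M) -scalerBl normrZ.
rewrite -(rmorph1 (@complex.real_complex R)) -rmorphB.
rewrite normcR' Ea Eb -rmorphM ltcR s1 ger0_norm; last by apply: divr_ge0; lra.
rewrite mulrAC ltr_pdivrMr // ltr_pM2l //; lra.
Qed.
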